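(* Let $\alpha\in(0,1)$, $R>0$, and let $V(\lambda)$ be the maximal Phase-II observation time when at the contact time $t_2$ the target is on the boundary of the observation disk with relative bearing $\lambda\in[-\pi,\pi]$. Then the maximum possible observation time is $\max_{\lambda\in[-\pi,\pi]}V(\lambda)=\frac{2R}{1-\alpha}$.
   Context: Target: position $(0,y_T(t))$, $\dot y_T=1$. Observer: position $(x_O(t),y_O(t))$, $\dot x_O=\alpha\cos\psi(t)$, $\dot y_O=\alpha\sin\psi(t)$, heading $\psi$ a measurable control. Contact with bearing $\lambda$ at time $t_2$ means $\big(x_O(t_2),y_O(t_2)-y_T(t_2)\big)=R(\sin\lambda,\cos\lambda)$. For a control on $[t_2,\infty)$, $t_f=\inf\{t\ge t_2: x_O(t)^2+(y_O(t)-y_T(t))^2>R^2\}$ and the observation time is $t_f-t_2$; $V(\lambda)$ is the supremum of $t_f-t_2$ over all controls. *)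

(* Defs.v *)
From HB Require Import structures.
From mathcomp Require Import all_boot all_order all_algebra.
From mathcomp Require Import all_classical all_reals all_analysis.
Set Implicit Arguments. Unset Strict Implicit. Unset Printing Implicit Defensive.
Import Order.TTheory GRing.Theory Num.Theory.
Import numFieldNormedType.Exports.
Local Open Scope classical_set_scope.
Local Open Scope ring_scope.

Section Pursuit.
Variable R : realType.

(* Relative position of the observer w.r.t. the target, at time t >= t2,
   for speed ratio alpha, disk radius r, bearing lam at contact time t2 and
   heading control psi (target: (0, y_T), dy_T/dt = 1; observer:
   dx_O/dt = alpha cos psi, dy_O/dt = alpha sin psi). *)
Definition x_rel (alpha r lam t2 : R) (psi : R -> R) (t : R) : R :=
  r * sin lam + alpha * (\int[lebesgue_measure]_(s in `[t2, t]) cos (psi s)).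

Definition y_rel (alpha r lam t2 : R) (psi : R -> R) (t : R) : R :=
  r * cos lam + alpha * (\int[lebesgue_measure]_(s in `[t2, t]) sin (psi s))
  - (t - t2).

Definition t_final (alpha r lam t2 : R) (psi : R -> R) : \bar R :=
  ereal_inf [set t%:E | t in [set t : R | t2 <= t /\
     r ^+ 2 < x_rel alpha r lam t2 psi t ^+ 2 + y_rel alpha r lam t2 psi t ^+ 2]].

Definition obs_time (alpha r lam t2 : R) (psi : R -> R) : \bar R :=
  (t_final alpha r lam t2 psi - t2%:E)%E.

Definition Vmax (alpha r t2 lam : R) : \bar R :=
  ereal_sup [set obs_time alpha r lam t2 psi |
               psi in [set psi : R -> R | measurable_fun setT psi]].

End Pursuit.

(* Main.v *)
Require Import Defs.
From HB Require Import structures.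
From mathcomp Require Import all_boot all_order all_algebra.
From mathcomp Require Import all_classical all_reals all_analysis.
From mathcomp Require Import ring lra.
Import Order.TTheory GRing.Theory Num.Theory.
Import numFieldNormedType.Exports.
Local Open Scope classical_set_scope.
Local Open Scope ring_scope.

Lemma meas_itv (R : realType) (a b : R) : a <= b ->
  fine (lebesgue_measure `[a, b]) = b - a.
Proof.
move=> ab; rewrite lebesgue_measure_itv /=.
rewrite lte_fin; case: (ltgtP a b) ab => //=.
- move=> *; lra.
Qed.

Lemma int_cst (R : realType) (a b c : R) : a <= b ->
  \int[lebesgue_measure]_(s in `[a, b]) c = c * (b - a).
Proof.
move=> ab; rewrite Rintegral_cst; last exact: measurable_itv.
by rewrite meas_itv.
Qed.

Lemma int_sin_le (R : realType) (psi : R -> R) (a b : R) :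
  measurable_fun setT psi -> a <= b ->
  \int[lebesgue_measure]_(s in `[a, b]) sin (psi s) <= b - a.
Proof.
move=> mpsi ab.
have mD : measurable `[a, b] by exact: measurable_itv.
have i1 : lebesgue_measure.-integrable `[a, b] (EFin \o (fun _ : R => (1:R))).
  apply: continuous_compact_integrable; first exact: segment_compact.
  by apply: continuous_subspaceT => x; exact: cst_continuous.
apply: le_trans.
  apply: (@le_Rintegral _ _ _ _ _ _ (fun _ => 1)) => //.
    eapply le_integrable; [exact: mD| | |exact: i1].
      apply/measurable_realfun.measurable_EFinP; apply: measurableT_comp.
        exact: measurable_realfun.continuous_measurable_fun (@continuous_sin R).
      exact: measurable_funS mpsi.
    by move=> x _ /=; rewrite normr1 lee_fin; exact: sin_max.
by rewrite int_cst // mul1r.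
Qed.

Lemma upper (R : realType) (alpha r t2 lam : R) (psi : R -> R) :
  0 < alpha < 1 -> 0 < r -> measurable_fun setT psi ->
  (obs_time alpha r lam t2 psi <= ((2 * r) / (1 - alpha))%:E)%E.
Proof.
move=> /andP[a0 a1] r0 mpsi.
set B := (2 * r) / (1 - alpha).
have hB : (1 - alpha) * B = 2 * r.
  rewrite /B; field; apply/eqP => h; lra.
have H : (t_final alpha r lam t2 psi <= (t2 + B)%:E)%E.
  apply/lee_addgt0Pr => e e0; apply: ge_ereal_inf.
  exists (t2 + B + e)%:E; last by rewrite EFinD.
  exists (t2 + B + e) => //; split.
    have : 0 <= B by rewrite /B divr_ge0 //; lra.
    lra.
  have hI := @int_sin_le R psi t2 (t2 + B + e) mpsi.
  have : t2 <= t2 + B + e.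
    have : 0 <= B by rewrite /B divr_ge0 //; lra.
    lra.
  move=> /hI {}hI.
  have cl := cos_le1 lam.
  set x := x_rel _ _ _ _ _ _.
  have hy : y_rel alpha r lam t2 psi (t2 + B + e) < - r.
    rewrite /y_rel.
    set I := \int[_]_(_ in _) _ in hI *.
    have : r * cos lam <= r by nra.
    have : alpha * I <= alpha * (t2 + B + e - t2) by nra.
    nra.
  have := sqr_ge0 x.
  nra.
move: H; rewrite /obs_time; case: (t_final _ _ _ _ _) => [x||] //=.
  rewrite !lee_fin => ?; lra.
by move=> _; rewrite addNye leNye.
Qed.

Lemma lower (R : realType) (alpha r t2 : R) :
  0 < alpha < 1 -> 0 < r ->
  obs_time alpha r 0 t2 (fun _ => pi / 2) = ((2 * r) / (1 - alpha))%:E.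
Proof.
move=> /[dup] ha /andP[a0 a1] r0.
apply/le_anti/andP; split.
  by apply: upper => //; exact: measurable_cst.
set B := (2 * r) / (1 - alpha).
have hB : (1 - alpha) * B = 2 * r.
  rewrite /B; field; apply/eqP => h; lra.
have H : ((t2 + B)%:E <= t_final alpha r 0 t2 (fun _ => (pi / 2)%R))%E.
  apply/ereal_infP => _ [t [t2t ht] <-]; rewrite lee_fin.
  move: ht; rewrite /x_rel /y_rel /= cos_pihalf sin_pihalf !int_cst //.
  rewrite sin0 cos0 => ht.
  have hu : 0 <= (1 - alpha) * (t - t2) by apply: mulr_ge0; lra.
  move: ht.
  have -> : r * 0 + alpha * (0 * (t - t2)) = 0 by ring.
  have -> : r * 1 + alpha * (1 * (t - t2)) - (t - t2) = r - (1 - alpha) * (t - t2) by ring.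
  set u := (1 - alpha) * (t - t2) => ht.
  have hu2 : 2 * r < u.
    rewrite ltNge; apply/negP => hc.
    have : (r - u) ^+ 2 <= r ^+ 2.
      rewrite -subr_ge0.
      have -> : r ^+ 2 - (r - u) ^+ 2 = u * (2 * r - u) by ring.
      apply: mulr_ge0 => //; lra.
    rewrite expr0n /= add0r in ht. lra.
  have : B < t - t2.
    rewrite /B ltr_pdivrMr; last lra.
    by rewrite [X in _ < X]mulrC.
  lra.
move: H; rewrite /obs_time; case: (t_final _ _ _ _ _) => [x||] //=.
  rewrite !lee_fin => ?; lra.
by move=> _; rewrite addye ?leey.
Qed.

Theorem lemma5 (R : realType) (alpha r t2 : R) :
  0 < alpha < 1 -> 0 < r ->
  (exists2 lam0 : R, - pi <= lam0 <= pi &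
     Vmax alpha r t2 lam0 = ((2 * r) / (1 - alpha))%:E) /\
  (forall lam : R, - pi <= lam <= pi ->
     (Vmax alpha r t2 lam <= ((2 * r) / (1 - alpha))%:E)%E).
Proof.
move=> ha r0.
have ub : forall lam, (Vmax alpha r t2 lam <= ((2 * r) / (1 - alpha))%:E)%E.
  move=> lam; apply: ge_ereal_sup => _ [psi mpsi <-].
  exact: upper.
split; last by move=> lam _; exact: ub.
exists 0.
  have := @pi_ge0 R; move=> h; apply/andP; split; lra.
apply/le_anti/andP; split; first exact: ub.
rewrite -(@lower R alpha r t2 ha r0); apply: ereal_sup_ubound.
exists (fun _ => pi / 2) => //; exact: measurable_cst.
Qed.
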